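(* Let $d\ge1$ and let $g=(\alpha_1,\dots,\alpha_d)\in(\mathbf{C}^* )^d$ with $\alpha_1,\dots,\alpha_d$ multiplicatively independent. Let $F\in\mathbf{C}[X_1^{\pm1},\dots,X_d^{\pm1}]$ be a Laurent polynomial such that the divisor $D=F^{-1}(0)\subset\mathbf{G}_m^d$ is irreducible and has finite stabilizer. Then the roots of the power sum $n\mapsto F(g^n)$ generate a subgroup of finite index in the multiplicative group generated by $\alpha_1,\dots,\alpha_d$.
   Context: A power sum is a function $n\mapsto \mathbf{f}(n)=\sum_{i=1}^k b_i\alpha_i^n$ with $k\ge1$, nonzero complex coefficients $b_i$ and pairwise distinct nonzero complex numbers $\alpha_i$; this representation is unique and the $\alpha_i$ are called the roots of $\mathbf{f}$. Here $g^n=(\alpha_1^n,\dots,\alpha_d^n)$. The stabilizer of $D\subset\mathbf{G}_m^d$ is $\{x\in\mathbf{G}_m^d: xD=D\}$. *)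

(* Defs.v *)
From HB Require Import structures.
From mathcomp Require Import all_boot all_order all_algebra.
From mathcomp Require Import classical_sets cardinality reals.
From mathcomp Require Import complex.
Set Implicit Arguments. Unset Strict Implicit. Unset Printing Implicit Defensive.
Import Order.TTheory GRing.Theory Num.Theory.
Local Open Scope ring_scope.
Local Open Scope classical_set_scope.

Section Defs.
Variable C : fieldType.
Variable d : nat.

Definition torus : set ('I_d -> C) := [set x | forall i, x i != 0].

(* A Laurent polynomial in X_1^{+-1},...,X_d^{+-1}, given as a finite list of
   terms (c, e) meaning c * X^e, with e : Z^d. *)
Definition laurent := seq (C * ('I_d -> int)).

Definition leval (F : laurent) (x : 'I_d -> C) : C :=
  \sum_(t <- F) t.1 * \prod_(i < d) x i ^ t.2 i.

Definition lzero (F : laurent) : set ('I_d -> C) :=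
  [set x | torus x /\ leval F x = 0].

Definition zclosed (A : set ('I_d -> C)) : Prop :=
  exists S : set laurent, A = [set x | torus x /\ forall G, S G -> leval G x = 0].

Definition zirreducible (Z : set ('I_d -> C)) : Prop :=
  Z !=set0 /\
  forall A B, zclosed A -> zclosed B -> Z `<=` A `|` B -> Z `<=` A \/ Z `<=` B.

Definition tmul (x y : 'I_d -> C) : 'I_d -> C := fun i => x i * y i.

Definition stabilizer (D : set ('I_d -> C)) : set ('I_d -> C) :=
  [set x | torus x /\ [set tmul x y | y in D] = D].

Definition gpow (g : 'I_d -> C) (n : nat) : 'I_d -> C := fun i => g i ^+ n.

Definition mult_indep (g : 'I_d -> C) : Prop :=
  forall k : 'I_d -> int, \prod_(i < d) g i ^ k i = 1 -> forall i, k i = 0.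

Definition gen_group (g : 'I_d -> C) : set C :=
  [set z | exists k : 'I_d -> int, z = \prod_(i < d) g i ^ k i].
End Defs.

Section PowerSum.
Variable C : fieldType.

Definition gen_group_seq (s : seq C) : set C :=
  [set z | exists k : 'I_(size s) -> int, z = \prod_(j < size s) s`_j ^ k j].

Definition power_sum_rep (f : nat -> C) (rep : seq (C * C)) : Prop :=
  [/\ (0 < size rep)%N,
      all (fun p => p.1 != 0) rep,
      all (fun p => p.2 != 0) rep,
      uniq (map snd rep) &
      forall n : nat, f n = \sum_(p <- rep) p.1 * p.2 ^+ n].

Definition finite_index (H G : set C) : Prop :=
  H `<=` G /\
  exists cs : seq C, all (fun c => c \in G) cs /\
    G `<=` [set z | exists2 c, c \in cs & exists2 h, H h & z = c * h].
End PowerSum.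

(* Main.v *)
Require Import Defs.
From HB Require Import structures.
From mathcomp Require Import all_boot all_order all_algebra.
From mathcomp Require Import classical_sets cardinality reals.
From mathcomp Require Import complex.
From mathcomp Require Import boolp.
Import Order.TTheory GRing.Theory Num.Theory.
Local Open Scope ring_scope.
Local Open Scope classical_set_scope.
Set Implicit Arguments. Unset Strict Implicit. Unset Printing Implicit Defensive.

Section Gen.
Variable C : numFieldType.
Variable d : nat.
Notation ex := {ffun 'I_d -> int}.

Definition mono (x : 'I_d -> C) (e : ex) : C := \prod_(i < d) x i ^ e i.

Lemma monoD x e e' : torus x -> mono x (e + e') = mono x e * mono x e'.
Proof.
move=> tx; rewrite /mono -big_split /=; apply: eq_bigr => i _.
by rewrite ffunE expfzDr.
Qed.

Lemma mono0 x : mono x 0 = 1.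
Proof. by rewrite /mono big1 // => i _; rewrite ffunE expr0z. Qed.

Lemma mono_neq0 x e : torus x -> mono x e != 0.
Proof.
move=> tx; rewrite /mono; apply/prodf_neq0 => i _.
by rewrite expfz_neq0.
Qed.

Lemma monoN x e : torus x -> mono x (- e) = (mono x e)^-1.
Proof.
move=> tx; apply: (@mulfI _ (mono x e)); first exact: mono_neq0.
rewrite -monoD // mulfV ?mono_neq0 //.
suff -> : e + - e = 0 by rewrite mono0.
by apply/ffunP => i; rewrite !ffunE subrr.
Qed.

Lemma monoZ x e (k : int) : torus x -> mono x (e *~ k) = mono x e ^ k.
Proof.
move=> tx; case: k => n.
  elim: n => [|n IH]; first by rewrite mulr0z mono0 expr0z.
  by rewrite intS mulrzDr monoD // IH mulr1z exprzD_nat expr1z.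
rewrite NegzE mulrNz monoN //.
have -> : mono x (e *~ n.+1) = mono x e ^ (n.+1 : int).
  elim: n.+1 => [|m IH]; first by rewrite mulr0z mono0 expr0z.
  by rewrite intS mulrzDr monoD // IH mulr1z exprzD_nat expr1z.
by rewrite -exprz_inv; exact: (esym (exprVn _ _)).
Qed.

Lemma mono_tmul x y e : torus x -> torus y -> mono (tmul x y) e = mono x e * mono y e.
Proof.
move=> tx ty; rewrite /mono -big_split /=; apply: eq_bigr => i _.
by rewrite /tmul exprzMl // unitfE.
Qed.


Definition key (t : C * ('I_d -> int)) : ex := finfun t.2.
Definition keys (F : laurent C d) := undup (map key F).
Definition coef (F : laurent C d) (e : ex) := \sum_(t <- F | key t == e) t.1.
Definition Ex (F : laurent C d) := filter (fun e => coef F e != 0) (keys F).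

Lemma Ex_uniq F : uniq (Ex F).
Proof. by rewrite filter_uniq // undup_uniq. Qed.

Lemma coef_Ex F e : e \in Ex F -> coef F e != 0.
Proof. by rewrite mem_filter => /andP[]. Qed.

Lemma leval_Ex F x : leval F x = \sum_(e <- Ex F) coef F e * mono x e.
Proof.
have -> : leval F x = \sum_(t <- F) t.1 * mono x (key t).
  apply: eq_bigr => t _; congr (_ * _); apply: eq_bigr => i _.
  by rewrite ffunE.
pose fk := fun t : C * ('I_d -> int) => (t.1, key t).
have -> : \sum_(t <- F) t.1 * mono x (key t) =
    \sum_(p <- map fk F) p.1 * mono x p.2 by rewrite big_map.
have -> : \sum_(p <- map fk F) p.1 * mono x p.2 =
    \sum_(e <- undup (map snd (map fk F)))
      \sum_(p <- map fk F | p.2 == e) p.1 * mono x p.2.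
  rewrite (exchange_big_dep xpredT) //=.
  apply: eq_big_seq => t tF.
  rewrite -big_filter.
  have -> : [seq i <- undup (map snd (map fk F)) | t.2 == i] = [:: t.2].
    rewrite -(filter_pred1_uniq (undup_uniq (map snd (map fk F)))); last first.
      by rewrite mem_undup map_f.
    by apply: eq_filter => e /=; rewrite eq_sym.
  by rewrite big_seq1.
have cE e : coef F e = \sum_(p <- map fk F | p.2 == e) p.1 by rewrite big_map.
rewrite /Ex /keys -map_comp big_filter [X in _ = X]big_mkcond /=.
apply: eq_bigr => e _.
rewrite /coef big_map big_distrl /=.
case: ifP => [_|/negbFE/eqP c0].
  by apply: eq_bigr => t /eqP ->.
rewrite (eq_bigr (fun t => t.1 * mono x e)); last by move=> t /eqP ->.
by rewrite -big_distrl /= c0 mul0r.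
Qed.


Lemma stab_of F (t : 'I_d -> C) lam : torus t -> lam != 0 ->
  (forall x, torus x -> leval F (tmul t x) = lam * leval F x) ->
  stabilizer (lzero F) t.
Proof.
move=> tt l0 H; split => //.
have tmulT y z : torus y -> torus z -> torus (tmul y z).
  by move=> ty tz i; rewrite /tmul mulf_neq0.
apply/seteqP; split => x.
  case=> y [ty ly] <-; split; first exact: tmulT.
  by rewrite H // ly mulr0.
move=> [tx lx].
pose t' := fun i => (t i)^-1.
have tt' : torus t' by move=> i; rewrite invr_eq0.
exists (tmul t' x).
  split; first exact: tmulT.
  have := H (tmul t' x) (tmulT _ _ _ _ tt' tx).
  have -> : tmul t (tmul t' x) = x.
    by apply: funext => i; rewrite /tmul /t' mulrA mulfV ?mul1r.
  by rewrite lx => /esym/eqP; rewrite mulf_eq0 (negbTE l0) /= => /eqP.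
by apply: funext => i; rewrite /tmul /t' mulrA mulfV ?mul1r.
Qed.

Lemma prod_exprz (a : C) (f : 'I_d -> int) : a != 0 ->
  \prod_(i < d) a ^ f i = a ^ (\sum_(i < d) f i).
Proof.
move=> a0.
symmetry; exact: (big_morph (fun m => a ^ m) (fun m n => expfzDr m n a0) (expr0z a)).
Qed.

Lemma two_neq0 : (2 : C) != 0.
Proof. by rewrite pnatr_eq0. Qed.

Lemma leval_shift F (v : ex) c0 (k : int) :
  (forall e, e \in Ex F -> \sum_(i < d) v i * e i = c0) ->
  forall x, torus x ->
  leval F (tmul (fun i => (2 : C) ^ (k * v i)) x) = 2 ^ (k * c0) * leval F x.
Proof.
move=> hv x tx.
have tt : torus (fun i => (2 : C) ^ (k * v i)).
  by move=> i /=; rewrite expfz_neq0 // two_neq0.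
rewrite !leval_Ex mulr_sumr; apply: eq_big_seq => e eE.
rewrite mono_tmul // mulrCA; congr (_ * (_ * _)).
rewrite /mono.
under eq_bigr do rewrite exprz_exp.
rewrite prod_exprz ?two_neq0 //; congr (_ ^ _).
by rewrite -(hv e eE) mulr_sumr; apply: eq_bigr => i _; rewrite mulrA.
Qed.

Lemma not_finite_of (T : Type) (S : set T) (f : nat -> T) :
  (forall k, S (f k)) -> injective f -> ~ finite_set S.
Proof.
move=> Sf fi fS.
have : finite_set (f @^-1` S).
  by apply: (finite_preimage _ fS) => a b _ _; apply: fi.
suff -> : f @^-1` S = setT by exact: infinite_nat.
by apply/seteqP; split => k //= _; exact: Sf.
Qed.

Lemma infinite_stab F (v : ex) c0 i0 :
  (forall e, e \in Ex F -> \sum_(i < d) v i * e i = c0) ->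
  0 < v i0 -> ~ finite_set (stabilizer (lzero F)).
Proof.
move=> hv vpos.
apply: (@not_finite_of _ _ (fun k : nat => tmul (fun i => (2 : C) ^ (k%:Z * v i)) (fun=> 1))).
  move=> k.
  have -> : tmul (fun i => (2 : C) ^ (k%:Z * v i)) (fun=> 1) = (fun i => (2 : C) ^ (k%:Z * v i)).
    by apply: funext => i; rewrite /tmul mulr1.
  apply: (stab_of (lam := 2 ^ (k%:Z * c0))).
  - by move=> i /=; rewrite expfz_neq0 // two_neq0.
  - by rewrite expfz_neq0 // two_neq0.
  - exact: leval_shift.
move=> k k' /(congr1 (fun f => f i0)); rewrite /tmul !mulr1.
have [m vm] : exists m : nat, v i0 = m%:Z.
  by exists `|v i0|%N; rewrite gtz0_abs.
rewrite vm in vpos *; have m0 : (0 < m)%N by move: vpos; rewrite ltz_nat.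
rewrite -!PoszM => h.
have : ((2 ^ (k * m))%:R : C) = (2 ^ (k' * m))%:R by rewrite !natrX; exact: h.
move/eqP; rewrite eqr_nat => /eqP /expnI => /(_ isT).
by move/eqP; rewrite eqn_pmul2r // => /eqP.
Qed.

End Gen.


Lemma clear_den (I : finType) (q : I -> rat) :
  exists D : int, exists z : I -> int, 0 < D /\ forall i, (z i)%:~R = D%:~R * q i.
Proof.
exists (\prod_i denq (q i)); exists (fun i => numq (q i) * \prod_(j | j != i) denq (q j)).
split.
  by apply: prodr_gt0 => i _; exact: denq_gt0.
move=> i.
rewrite [in RHS](bigD1 i) //=.
rewrite !intrM numqE -mulrA mulrC.
by rewrite [RHS]mulrCA; congr (_ * _); exact: mulrC.
Qed.

Section Lat.
Variable d : nat.
Notation ex := {ffun 'I_d -> int}.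

Lemma ffunMzE (f : ex) (z : int) i : (f *~ z) i = f i *~ z.
Proof.
case: z => n; first by rewrite ffunMnE.
by rewrite !NegzE !mulrNz ffunE ffunMnE.
Qed.

Definition Lat (E : seq ex) (w : ex) :=
  exists k : nat -> int, w = \sum_(0 <= j < size E) E`_j *~ k j.

Lemma Lat0 E : Lat E 0.
Proof. by exists (fun=> 0); rewrite big1 // => j _; rewrite mulrz0. Qed.

Lemma LatD E w w' : Lat E w -> Lat E w' -> Lat E (w + w').
Proof.
move=> [k ->] [k' ->]; exists (fun j => k j + k' j).
by rewrite -big_split /=; apply: eq_bigr => j _; rewrite mulrzDr.
Qed.

Lemma LatZ E w c : Lat E w -> Lat E (w *~ c).
Proof.
move=> [k ->]; exists (fun j => k j * c).
by rewrite mulrz_suml; apply: eq_bigr => j _; rewrite mulrzA.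
Qed.

Lemma LatN E w : Lat E w -> Lat E (- w).
Proof. by move=> /(LatZ (-1)); rewrite mulrN1z. Qed.

Lemma Lat_nth E j : (j < size E)%N -> Lat E E`_j.
Proof.
move=> js; exists (fun j' => (j' == j)%:Z).
have jin : j \in index_iota 0 (size E) by rewrite /index_iota mem_iota subn0 add0n.

rewrite (bigD1_seq j jin (iota_uniq _ _)) /= eqxx mulr1z big1 ?addr0 //.
move=> j' /negbTE ->.
by rewrite mulr0z.
Qed.

Lemma Lat_sum E (I : Type) (r : seq I) (F : I -> ex) :
  (forall i, Lat E (F i)) -> Lat E (\sum_(i <- r) F i).
Proof.
move=> H; elim: r => [|a r IH]; first by rewrite big_nil; exact: Lat0.
by rewrite big_cons; apply: LatD.
Qed.


Lemma dichot (E : seq ex) : (0 < size E)%N ->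
  (exists v : ex, exists i0, v i0 != 0 /\
     forall e, e \in E -> \sum_(i < d) v i * e i = \sum_(i < d) v i * E`_0 i)
  \/ (exists N : int, 0 < N /\
     forall i : 'I_d, Lat E ([ffun i' => (i == i')%:Z] *~ N)).
Proof.
move=> E0.
pose A : 'M[rat]_(size E, d) := \matrix_(j, i) ((E`_j i - E`_0 i)%:~R).
case: (boolP (row_full A)) => [/row_fullP [B hB] | nf].
  right.
  have [D [z [Dpos hz]]] := clear_den (fun p : 'I_d * 'I_(size E) => B p.1 p.2).
  exists D; split => // i.
  have -> : [ffun i' => (i == i')%:Z] *~ D =
      \sum_(j < size E) (E`_j - E`_0) *~ z (i, j).
    apply/ffunP => i'; rewrite ffunMzE ffunE sum_ffunE.
    apply: (@intr_inj rat).
    rewrite rmorph_sum /=.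
    have := congr1 (fun M : 'M[rat]_d => D%:~R * M i i') hB.
    rewrite /= !mxE mulr_sumr => h.
    transitivity (D%:~R * (i == i')%:R : rat).
      by rewrite mulrzz intrM mulrC; case: (i == i'); rewrite /= ?mulr1 ?mulr0.
    rewrite -h; apply: eq_bigr => j _.
    rewrite ffunMzE ffunE mulrzz intrM (hz (i, j)) !mxE /=.
    by rewrite ffunE mulrA mulrC.
  apply: Lat_sum => j; apply: LatZ; apply: LatD; first exact: Lat_nth.
  by apply: LatN; exact: Lat_nth.
left.
have rA : (\rank A < d)%N by rewrite ltnNge col_leq_rank.
pose K := kermx A^T.
have : K != 0.
  by rewrite -mxrank_eq0 mxrank_ker mxrank_tr -lt0n subn_gt0.
move=> Kn0.
have [i [j0 Kij]] : exists i, exists j, K i j != 0.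
  have : [exists i, exists j, K i j != 0].
    apply: contraR Kn0 => /existsPn H; apply/eqP/matrixP => i j; rewrite [RHS]mxE.
    by move/existsPn: (H i) => /(_ j); rewrite negbK => /eqP.
  by case/existsP => i /existsP [j Kij]; exists i, j.
pose u := row i K.
have hu : u *m A^T = 0 by rewrite -row_mul mulmx_ker row0.
have [D [z [Dpos hz]]] := clear_den (fun j => u 0 j).
exists [ffun j => z j], j0; split.
  rewrite ffunE; apply/eqP => z0; move: (hz j0); rewrite z0 /= /u mxE => /esym/eqP.
  by rewrite mulf_eq0 (negbTE Kij) intr_eq0 orbF; move: Dpos; rewrite lt0r => /andP[/negbTE ->].
move=> e eE.
have re : (index e E < size E)%N by rewrite index_mem.
have := congr1 (fun M : 'rV[rat]_(size E) => D%:~R * M 0 (Ordinal re)) hu.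
rewrite /= !mxE mulr0 mulr_sumr => /eqP; rewrite -subr_eq0 subr0 => /eqP h.
apply/eqP; rewrite -subr_eq0 -sumrB; apply/eqP; apply: (@intr_inj rat).
rewrite rmorph_sum /=; apply: etrans (etrans h _); last by [].
apply: eq_bigr => i' _.
rewrite ffunE -mulrBr intrM (hz i') !mxE /= nth_index // mulrA.
by [].
Qed.

End Lat.


Section Main.
Variable C : numFieldType.
Variable d : nat.
Notation ex := {ffun 'I_d -> int}.

Lemma mono_sum (x : 'I_d -> C) (I : Type) (r : seq I) (f : I -> ex) :
  torus x -> mono x (\sum_(i <- r) f i) = \prod_(i <- r) mono x (f i).
Proof.
move=> tx; elim: r => [|a r IH]; first by rewrite !big_nil mono0.
by rewrite !big_cons monoD // IH.
Qed.

Lemma LatH (g : 'I_d -> C) (E : seq ex) w : torus g -> Lat E w ->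
  gen_group_seq (map (mono g) E) (mono g w).
Proof.
move=> tg [k ->].
exists (fun j : 'I_(size (map (mono g) E)) => k j).
rewrite mono_sum //.
rewrite -(big_mkord xpredT (fun j => (map (mono g) E)`_j ^ k j)) size_map.
apply: eq_big_nat => j /andP[_ js].
by rewrite monoZ // (nth_map 0).
Qed.

Lemma genseq_sub (g : 'I_d -> C) (E : seq ex) z : torus g ->
  gen_group_seq (map (mono g) E) z -> gen_group g z.
Proof.
move=> tg [k ->].
have -> : \prod_(j < size (map (mono g) E)) (map (mono g) E)`_j ^ k j =
    mono g (\sum_(j < size (map (mono g) E)) E`_j *~ k j).
  rewrite mono_sum //; apply: eq_bigr => j _.
  by rewrite monoZ // (nth_map 0) // -(size_map (mono g)).
by exists (fun i => (\sum_(j < size (map (mono g) E)) E`_j *~ k j) i).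
Qed.

End Main.

Unset Implicit Arguments.

Theorem lemma5p2 (R : realType) (d : nat) (g : 'I_d -> R[i]) (F : laurent R[i] d) :
  (0 < d)%N ->
  (forall i, g i != 0) ->
  mult_indep g ->
  zirreducible (lzero F) ->
  finite_set (stabilizer (lzero F)) ->
  exists rep : seq (R[i] * R[i]),
    power_sum_rep (fun n => leval F (gpow g n)) rep /\
    finite_index (gen_group_seq (map snd rep)) (gen_group g).
Proof.
move=> d0 g0 mi _ fin.
have tg : torus g by [].
case: (ltnP 0 (size (Ex F))) => [E0|]; last first.
  rewrite leqn0 => /nilP E0; exfalso.
  apply: (@infinite_stab _ _ F [ffun=> 1] 0 (Ordinal d0) _ _ fin).
    by rewrite E0.
  by rewrite ffunE.
case: (dichot E0) => [[v [i0 [vi0 hv]]] | [N [Npos hN]]].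
  exfalso.
  apply: (@infinite_stab _ _ F (v *~ v i0) ((\sum_(i < d) v i * (Ex F)`_0 i) * v i0) i0 _ _ fin).
    move=> e eE; rewrite -(hv e eE) mulr_suml; apply: eq_bigr => i _.
    by rewrite ffunMzE mulrzz mulrAC.
  by rewrite ffunMzE mulrzz lt0r mulf_neq0 //= -expr2 sqr_ge0.
set E := Ex F.
exists (map (fun e => (coef F e, mono g e)) E).
have hs : map snd (map (fun e => (coef F e, mono g e)) E) = map (mono g) E.
  by rewrite -map_comp.
split.
  split.
  - by rewrite size_map.
  - by apply/allP => p /mapP [e eE ->]; exact: coef_Ex.
  - by apply/allP => p /mapP [e eE ->]; exact: mono_neq0.
  - rewrite hs map_inj_in_uniq ?Ex_uniq // => e e' _ _ h.
    have h1 : mono g (e - e') = 1.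
      by rewrite monoD // monoN // h mulfV // mono_neq0.
    have := mi (fun i => (e - e') i) h1.
    move=> H; apply/ffunP => i; move: (H i); idtac.
    by rewrite !ffunE => /eqP; rewrite addr_eq0 opprK => /eqP.
  - move=> n; rewrite (@leval_Ex R[i]) big_map; apply: eq_bigr => e _ /=.
    congr (_ * _); rewrite /mono /gpow -prodrXl; apply: eq_bigr => i _.
    exact: (exprzAC (g i) n (e i)).
rewrite (_ : [seq i.2 | i <- _] = map (mono g) E); last by rewrite -map_comp.
split.
  by move=> z; apply: genseq_sub.
have [Nn NE] : exists Nn : nat, N = Nn%:Z by exists `|N|%N; rewrite gtz0_abs.
have Nn0 : (0 < Nn)%N by move: Npos; rewrite NE ltz_nat.
have N0 : N != 0 by rewrite gt_eqF.
pose cs := map (fun f : {ffun 'I_d -> 'I_Nn} => mono g [ffun i => ((f i : nat)%:Z)]) (enum (predT : pred {ffun 'I_d -> 'I_Nn})).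
exists cs; split.
  by apply/allP => c /mapP [f _ ->]; rewrite inE; exists (fun i => [ffun i => ((f i : nat)%:Z)] i).
move=> z [k ->].
pose r i := (k i %% N)%Z.
pose q i := (k i %/ N)%Z.
have rlt i : (`|r i| < Nn)%N.
  by rewrite -ltz_nat gez0_abs ?modz_ge0 // -NE ltz_pmod.
pose f : {ffun 'I_d -> 'I_Nn} := [ffun i => Ordinal (rlt i)].
exists (mono g [ffun i => ((f i : nat)%:Z)]).
  by apply: map_f; rewrite mem_enum.
exists (mono g [ffun i => q i * N]).
  apply: LatH => //.
  have -> : [ffun i => q i * N] = \sum_(i < d) [ffun i' => (i == i')%:Z] *~ N *~ q i.
    apply/ffunP => i'; rewrite ffunE sum_ffunE (bigD1 i') //= big1 ?addr0.
      by rewrite !ffunMzE ffunE eqxx !mulrzz mul1r mulrC.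
    move=> i /negbTE ni; rewrite !ffunMzE ffunE ni.
    by rewrite /= !mul0rz.
  by apply: Lat_sum => i; apply: LatZ; exact: hN.
rewrite -monoD //.
have -> : [ffun i => (f i : nat)%:Z] + [ffun i => q i * N] = [ffun i => k i].
  apply/ffunP => i; rewrite !ffunE /= gez0_abs ?modz_ge0 // addrC.
  by rewrite /q /r -divz_eq.
by rewrite /mono; apply: eq_bigr => i _; rewrite ffunE.
Qed.
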